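(* Let $N$ be a finite set of players and $E$ a finite set of resources; for each $i\in N$ let $d_i\in\mathbb{N}$ and $E_i\subseteq E$ with $E_i\neq\emptyset$, and for each $e\in E$ let $c_e:\mathbb{N}\to\mathbb{R}_+$ be non-decreasing and convex. Define $f_i(U)=d_i$ if $U\cap E_i\neq\emptyset$ and $f_i(U)=0$ otherwise, and $C_{i,e}(x;t)=c_e(x+t)\,x$. Then each $f_i$ is an integral polymatroid rank function, $\mathbb{B}_{f_i}(d_i)$ is exactly the set of vectors $\vec x_i\in\mathbb{N}^E$ with $x_i(E)=d_i$ and $x_{i,e}=0$ for $e\notin E_i$, and each $C_{i,e}$ is regular; in particular, the singleton integer-splittable congestion game in which player $i$ distributes $d_i$ integral units over $E_i$ and has private cost $\pi_i(\vec x)=\sum_{e\in E}c_e(x_{i,e}+x_{-i,e})x_{i,e}$ is a polymatroid game.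
   Context: $\mathbb{N}=\{0,1,2,\dots\}$. An integral polymatroid rank function is $f:2^E\to\mathbb{N}$ with $f(\emptyset)=0$, monotone and submodular. $x(U)=\sum_{e\in U}x_e$, $\mathbb{B}_f(d)=\{\vec x\in\mathbb{N}^E: x(U)\le f(U)\ \forall U\subseteq E,\ x(E)=d\}$. $x_{-i,e}=\sum_{j\neq i}x_{j,e}$. For $C:\mathbb{N}\times\mathbb{N}\to\mathbb{R}$, $C^-(x;t)=C(x;t)-C(x-1;t)$ for $x\ge1$; $C$ is regular if $C^-(x;t)\le C^-(x;t+1)$ and $C^-(x;t+1)\le C^-(x+1;t)$ for all $x\ge1,t\in\mathbb{N}$. A polymatroid game consists of players $i\in N$ with demands $d_i$, integral polymatroid rank functions $f_i$ on the common resource set $E$, strategy sets $\mathbb{B}_{f_i}(d_i)$, and private costs $\pi_i(\vec x)=\sum_{e\in E}C_{i,e}(x_{i,e};x_{-i,e})$ with every $C_{i,e}:\mathbb{N}\times\mathbb{N}\to\mathbb{R}_+$ regular. *)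

(* Defs.v *)
From mathcomp Require Import all_boot all_order all_algebra.
Set Implicit Arguments. Unset Strict Implicit. Unset Printing Implicit Defensive.
Import Order.TTheory GRing.Theory Num.Theory.
Local Open Scope ring_scope.

Definition xsum (E : finType) (x : E -> nat) (U : {set E}) : nat :=
  (\sum_(e in U) x e)%N.

Definition polymatroid_rank (E : finType) (f : {set E} -> nat) : Prop :=
  [/\ f set0 = 0%N,
      (forall U V : {set E}, U \subset V -> (f U <= f V)%N) &
      (forall U V : {set E}, (f (U :|: V) + f (U :&: V) <= f U + f V)%N)].

Definition inB (E : finType) (f : {set E} -> nat) (d : nat) (x : E -> nat) : Prop :=
  (forall U : {set E}, (xsum x U <= f U)%N) /\ xsum x setT = d.

(* C^-(x;t) = C(x;t) - C(x-1;t) (used for x >= 1) *)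
Definition Cminus (R : realFieldType) (C : nat -> nat -> R) (x t : nat) : R :=
  C x t - C x.-1 t.

Definition regular (R : realFieldType) (C : nat -> nat -> R) : Prop :=
  forall x t : nat, (1 <= x)%N ->
    Cminus C x t <= Cminus C x t.+1 /\ Cminus C x t.+1 <= Cminus C x.+1 t.

Definition polymatroid_game (R : realFieldType) (N E : finType)
  (f : N -> {set E} -> nat) (C : N -> E -> nat -> nat -> R) : Prop :=
  (forall i, polymatroid_rank (f i)) /\
  (forall i e, regular (C i e) /\ forall x t, 0 <= C i e x t).

Definition f_single (E : finType) (d : nat) (Ei : {set E}) (U : {set E}) : nat :=
  if U :&: Ei != set0 then d else 0%N.

Definition C_single (R : realFieldType) (c : nat -> R) (x t : nat) : R :=
  c (x + t)%N * x%:R.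

Definition nondecreasing_seq (R : realFieldType) (c : nat -> R) : Prop :=
  forall x : nat, c x <= c x.+1.

Definition convex_seq (R : realFieldType) (c : nat -> R) : Prop :=
  forall x : nat, c x.+1 - c x <= c x.+2 - c x.+1.

(* Main.v *)
Require Import Defs.
From mathcomp Require Import all_boot all_order all_algebra.
From mathcomp Require Import ring lra zify.
Import Order.TTheory GRing.Theory Num.Theory.
Local Open Scope ring_scope.

Lemma reg_single (R : realFieldType) (c : nat -> R)
  (hc0 : forall x, 0 <= c x) (hm : nondecreasing_seq c) (hcv : convex_seq c) :
  regular (C_single c).
Proof.
move=> [|n] t // _; rewrite /Cminus /C_single /=.
rewrite !addSn !addnS.
have h1 := hm (n + t)%N; have h2 := hcv (n + t)%N.
have h0 : (0 : R) <= n%:R by apply: ler0n.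
set a := c (n + t)%N in h1 h2 *; set b := c (n + t).+1 in h1 h2 *;
set g := c (n + t).+2 in h2 *.
rewrite !mulrSr.

split; nra.
Qed.

Theorem proposition4p1 (R : realFieldType) (N E : finType)
  (d : N -> nat) (Ei : N -> {set E}) (c : E -> nat -> R)
  (hEi : forall i, Ei i != set0)
  (hc0 : forall e x, 0 <= c e x)
  (hcmono : forall e, nondecreasing_seq (c e))
  (hcconv : forall e, convex_seq (c e)) :
  [/\ (forall i, polymatroid_rank (f_single (d i) (Ei i))),
      (forall i (x : E -> nat),
         inB (f_single (d i) (Ei i)) (d i) x <->
         (xsum x setT = d i /\ forall e, e \notin Ei i -> x e = 0%N)),
      (forall (i : N) e, regular (C_single (c e))) &
      polymatroid_game (fun i => f_single (d i) (Ei i))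
                       (fun (i : N) e => C_single (c e))].
Proof.
have PR : forall i, polymatroid_rank (f_single (d i) (Ei i)).
  move=> i; split.
  - by rewrite /f_single set0I eqxx.
  - move=> U V sUV; rewrite /f_single.
    case: ifP => hU //; case: ifP => hV //.
    move/negbFE: hV => /eqP hV; move: hU.
    by rewrite -subset0 -hV setSI.
  - move=> U V; rewrite /f_single setIUl setIIl.
    case: (eqVneq (U :&: Ei i) set0) => hU; case: (eqVneq (V :&: Ei i) set0) => hV;
    rewrite ?hU ?hV ?set0I ?setI0 ?setU0 ?set0U ?eqxx /=;
    repeat case: ifP => _; lia.
have REG : forall (i : N) e, regular (C_single (c e)).
  by move=> i e; apply: reg_single.
split => //.
- move=> i x; split.
  + move=> [H Hs]; split => // e he.
    have := H (~: Ei i).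
    rewrite /xsum /f_single setIC setICr eqxx leqn0 (bigD1 e) ?inE // addn_eq0.
    by case/andP => /eqP.
  + move=> [Hs H]; split => // U.
    rewrite /f_single; case: ifP => hU.
    * rewrite -Hs /xsum [X in (_ <= X)%N](big_setID U) /= setTI; exact: leq_addr.
    * rewrite /xsum big1 // => e eU; apply: H; apply/negP => eE.
      move/negbFE: hU => /eqP hU.
      have : e \in U :&: Ei i by rewrite inE eU.
      by rewrite hU inE.
- split => // i e; split; first exact: REG.
  move=> x t; rewrite /C_single; apply: mulr_ge0 => //; exact: ler0n.
Qed.
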